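(* In the weighted kidney exchange game (W-KEG), even assuming players cannot hide vertices, a player can have a strict incentive to misreport her weights: there exists a W-KEG instance in which some player $p$ strictly increases her true utility by reporting a different (larger) weight $w^p_{vu}$ for some external edge $(v,u)$ with $v\in V^p$, the independent agent then computing its maximum-weight matching with the reported weights.
   Context: W-KEG: players $N=\{1,\dots,n\}$; player $p$ has internal graph $G^p=(V^p,E^p)$ (pairwise disjoint vertex sets); $E^I$ is a set of external edges each joining vertices of two different players; $E^I_p$ is the set of external edges incident to $V^p$. Each player $p$ has nonnegative weights $w^p_e$ on $E^p\cup E^I_p$. A strategy of player $p$ is a matching $M^p$ of $G^p$. The independent agent selects a maximum-weight matching $M^I$ of the external edges whose endpoints are uncovered by $\bigcup_pM^p$, where an external edge $(v,u)$ with $v\in V^i$, $u\in V^j$ has weight $w^I_{vu}=w^i_{vu}+w^j_{vu}$ computed from the players' reported weights. With $M^I_p$ the edges of $M^I$ incident to $V^p$, player $p$'s (true) utility is $\sum_{e\in M^p}w^p_e+\sum_{e\in M^I_p}w^p_e$ with her true weights. *)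

(* Defs.v *)
From mathcomp Require Import all_boot.
Set Implicit Arguments. Unset Strict Implicit. Unset Printing Implicit Defensive.

Section WKEG.
Variables (n : nat) (V : finType) (own : V -> 'I_n).
(* own v = the player whose vertex set V^p contains v; the V^p are thus
   pairwise disjoint: V^p = [set v | own v == p].  Edges are 2-element
   vertex sets. *)

Definition Vp (p : 'I_n) : {set V} := [set v | own v == p].
Definition is_edge (e : {set V}) : bool := #|e| == 2.

Definition internal_ok (Eint : 'I_n -> {set {set V}}) : Prop :=
  forall p e, e \in Eint p -> is_edge e /\ e \subset Vp p.

Definition external_ok (EI : {set {set V}}) : Prop :=
  forall e, e \in EI ->
    is_edge e /\ [exists u in e, exists v in e, own u != own v].

Definition EIp (EI : {set {set V}}) (p : 'I_n) : {set {set V}} :=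
  [set e in EI | [exists v in e, own v == p]].

Definition is_matching (E M : {set {set V}}) : Prop :=
  M \subset E /\ forall e1 e2, e1 \in M -> e2 \in M -> e1 != e2 -> [disjoint e1 & e2].

Definition profile_ok (Eint : 'I_n -> {set {set V}}) (Ms : 'I_n -> {set {set V}}) : Prop :=
  forall p, is_matching (Eint p) (Ms p).

Definition covered (Ms : 'I_n -> {set {set V}}) : {set V} :=
  \bigcup_(p < n) \bigcup_(e in Ms p) e.

Definition available (EI : {set {set V}}) (Ms : 'I_n -> {set {set V}}) : {set {set V}} :=
  [set e in EI | [disjoint e & covered Ms]].

(* w^I_e = w^i_e + w^j_e, for e joining V^i and V^j, from reported weights r *)
Definition wI (r : 'I_n -> {set V} -> nat) (e : {set V}) : nat :=
  \sum_(p < n | [exists v in e, own v == p]) r p e.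

Definition max_IA (EI : {set {set V}}) (Ms : 'I_n -> {set {set V}})
  (r : 'I_n -> {set V} -> nat) (MI : {set {set V}}) : Prop :=
  is_matching (available EI Ms) MI /\
  forall M, is_matching (available EI Ms) M ->
    \sum_(e in M) wI r e <= \sum_(e in MI) wI r e.

Definition utility (EI : {set {set V}}) (w : 'I_n -> {set V} -> nat)
  (Ms : 'I_n -> {set {set V}}) (MI : {set {set V}}) (p : 'I_n) : nat :=
  \sum_(e in Ms p) w p e + \sum_(e in MI | e \in EIp EI p) w p e.

Definition misreport (w : 'I_n -> {set V} -> nat) (p : 'I_n) (e0 : {set V}) (x : nat)
  : 'I_n -> {set V} -> nat :=
  fun q e => if (q == p) && (e == e0) then x else w q e.

End WKEG.

(* Main.v *)
Require Import Defs.
From mathcomp Require Import all_boot.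

Definition ownX (v : 'I_3) : 'I_2 := if val v == 2 then ord_max else ord0.
Definition a0 : 'I_3 := ord0.
Definition a1 : 'I_3 := inord 1.
Definition b0 : 'I_3 := ord_max.
Definition e1 : {set 'I_3} := [set a0; b0].
Definition e2 : {set 'I_3} := [set a1; b0].
Definition EIX : {set {set 'I_3}} := [set e1; e2].
Definition wX (p : 'I_2) (e : {set 'I_3}) : nat :=
  if p == ord0 then (if e == e1 then 1 else 0) else (if e == e2 then 2 else 0).
Definition MsX : 'I_2 -> {set {set 'I_3}} := fun _ => set0.
Definition EintX : 'I_2 -> {set {set 'I_3}} := fun _ => set0.

Lemma a1_val : nat_of_ord a1 = 1. Proof. by rewrite /a1 inordK. Qed.

Lemma e12 : e1 != e2.
Proof.
apply/negP => /eqP h.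
have : a0 \in e2 by rewrite -h !inE eqxx.
by rewrite !inE -!val_eqE /= a1_val.
Qed.

Lemma inEIX e : (e \in EIX) = (e == e1) || (e == e2).
Proof. by rewrite /EIX !inE. Qed.

Lemma b0_in1 : b0 \in e1. Proof. by rewrite !inE eqxx orbT. Qed.
Lemma b0_in2 : b0 \in e2. Proof. by rewrite !inE eqxx orbT. Qed.

Lemma touch (e : {set 'I_3}) (p : 'I_2) : e \in EIX -> [exists v in e, ownX v == p].
Proof.
move=> he.
have hb : b0 \in e by move: he; rewrite inEIX => /orP [] /eqP ->; [exact b0_in1 | exact b0_in2].
case: p => [[|[|k]] Hk].
- apply/existsP; move: he; rewrite inEIX => /orP [] /eqP -> ; [exists a0 | exists a1]; rewrite !inE eqxx /=;
  rewrite /ownX /= ?a1_val //; apply/eqP; exact: val_inj.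
- apply/existsP; exists b0; rewrite hb /ownX /=; apply/eqP; exact: val_inj.
- by [].
Qed.

Lemma wI_eq r e : e \in EIX -> wI ownX r e = r ord0 e + r ord_max e.
Proof.
move=> he; rewrite /wI big_mkcond !big_ord_recr big_ord0 /=.
rewrite (@touch e ord0 he) (@touch e ord_max he) /=.
have -> : (widen_ord (leqnSn 1) ord_max) = ord0 :> 'I_2 by exact: val_inj.
by [].
Qed.

Lemma avail : available EIX MsX = EIX.
Proof.
have hc : covered MsX = set0.
  by rewrite /covered big1 // => p _; rewrite /MsX big_set0.
apply/setP => e; rewrite inE hc.
have -> : [disjoint e & (set0 : {set 'I_3})] by rewrite disjoint_sym; apply: eq_disjoint0 => x; rewrite inE.
by rewrite andbT.
Qed.

Lemma match_cases M : is_matching EIX M -> M = set0 \/ M = [set e1] \/ M = [set e2].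
Proof.
move=> [/subsetP Hs Hd].
have H12 : ~~ ((e1 \in M) && (e2 \in M)).
  apply/negP => /andP [h1 h2].
  have := Hd _ _ h1 h2 e12.
  by move=> hd; have := disjointFr hd b0_in1; rewrite b0_in2.
case: (boolP (e1 \in M)) => h1.
- have h2 : e2 \notin M by move: H12; rewrite h1.
  have : M \subset [set e1].
    apply/subsetP => x hx; rewrite inE.
    by have := Hs x hx; rewrite inEIX => /orP [] // /eqP hx2; move: h2; by rewrite -hx2 hx.
  by rewrite subset1 => /orP [] /eqP ->; auto.
- have : M \subset [set e2].
    apply/subsetP => x hx; rewrite inE.
    have := Hs x hx; rewrite inEIX => /orP [] // /eqP hx1.
    by move: h1; rewrite -hx1 hx.
  by rewrite subset1 => /orP [] /eqP ->; auto.
Qed.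

Lemma single_match e : e \in EIX -> is_matching EIX [set e].
Proof.
move=> he; split; first by rewrite sub1set.
by move=> x y; rewrite !inE => /eqP -> /eqP ->; rewrite eqxx.
Qed.

Lemma inEIp (e : {set 'I_3}) : e \in EIX -> e \in EIp ownX EIX ord0.
Proof. by move=> he; rewrite inE he (@touch e ord0 he). Qed.

Lemma util1 (e : {set 'I_3}) : e \in EIX -> utility ownX EIX wX MsX [set e] ord0 = wX ord0 e.
Proof.
move=> he; rewrite /utility /MsX big_set0 add0n big_mkcondr big_set1.
by rewrite (@inEIp e he).
Qed.

Lemma max_is r MI : max_IA ownX EIX MsX r MI ->
  wI ownX r e1 < wI ownX r e2 -> MI = [set e2].
Proof.
rewrite /max_IA avail => -[Hm Hmax] hlt.
have he2 : e2 \in EIX by rewrite inEIX eqxx orbT.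
have := Hmax _ (@single_match e2 he2); rewrite big_set1.
case: (@match_cases MI Hm) => [->|[->|->]] //; rewrite ?big_set0 ?big_set1.
- by rewrite leqn0 /wI => /eqP h; move: hlt; rewrite /wI h.
- by rewrite leqNgt hlt.
Qed.

Lemma max_is' r MI : max_IA ownX EIX MsX r MI ->
  wI ownX r e2 < wI ownX r e1 -> MI = [set e1].
Proof.
rewrite /max_IA avail => -[Hm Hmax] hlt.
have he1 : e1 \in EIX by rewrite inEIX eqxx.
have := Hmax _ (@single_match e1 he1); rewrite big_set1.
case: (@match_cases MI Hm) => [->|[->|->]] //; rewrite ?big_set0 ?big_set1.
- by rewrite leqn0 /wI => /eqP h; move: hlt; rewrite /wI h.
- by rewrite leqNgt hlt.
Qed.

Theorem lemma3 :
  exists (n : nat) (V : finType) (own : V -> 'I_n)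
         (Eint : 'I_n -> {set {set V}}) (EI : {set {set V}})
         (w : 'I_n -> {set V} -> nat),
    internal_ok own Eint /\ external_ok own EI /\
    exists (Ms : 'I_n -> {set {set V}}) (p : 'I_n) (e0 : {set V}) (x : nat),
      profile_ok Eint Ms /\ e0 \in EIp own EI p /\ w p e0 < x /\
      forall MI MI' : {set {set V}},
        max_IA own EI Ms w MI ->
        max_IA own EI Ms (misreport w p e0 x) MI' ->
        utility own EI w Ms MI p < utility own EI w Ms MI' p.
Proof.
have he1 : e1 \in EIX by rewrite inEIX eqxx.
have he2 : e2 \in EIX by rewrite inEIX eqxx orbT.
exists 2, ('I_3 : finType), ownX, EintX, EIX, wX.
split; first by move=> p e; rewrite inE.
split.
  move=> e he; split.
    move: he; rewrite inEIX => /orP [] /eqP ->; rewrite /is_edge cards2;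
      by rewrite -val_eqE /= ?a1_val.
  apply/existsP; exists b0; apply/andP; split.
    by move: he; rewrite inEIX => /orP [] /eqP ->; [exact b0_in1 | exact b0_in2].
  move: he; rewrite inEIX => /orP [] /eqP ->; [apply/existsP; exists a0 | apply/existsP; exists a1];
    rewrite !inE eqxx /= /ownX /= ?a1_val //.
exists MsX, ord0, e1, 5.
split; first by move=> p; split; [rewrite /MsX sub0set | move=> x y; rewrite /MsX inE].
split; first exact: (@inEIp e1 he1).
split; first by rewrite /wX /= eqxx.
move=> MI MI' H H'.
have n12 : (e1 == e2) = false by apply/negbTE; exact: e12.
have n21 : (e2 == e1) = false by rewrite eq_sym.
have w1 : wI ownX wX e1 = 1 by rewrite wI_eq // /wX /= n12 eqxx.
have w2 : wI ownX wX e2 = 2 by rewrite wI_eq // /wX /= n21 eqxx.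
have r1 : wI ownX (misreport wX ord0 e1 5) e1 = 5 by rewrite wI_eq // /misreport /wX /= n12 !eqxx.
have r2 : wI ownX (misreport wX ord0 e1 5) e2 = 2 by rewrite wI_eq // /misreport /wX /= n21 !eqxx.
rewrite (@max_is wX MI H) ?w1 ?w2 // (@max_is' _ MI' H') ?r1 ?r2 // !util1 //.
by rewrite /wX /= n21 eqxx.
Qed.
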